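(* Let $n\ge 1$ and $q>1$. The maximum success probability of any restricted strategy for the New Hats-on-a-line Game with $q$ hat colours and $n$ players is $1-\left(\frac{q-1}{q}\right)^{n}$.
   Context: The New Hats-on-a-line Game with $q$ colours and $n$ players: players $P_1,\dots,P_n$ stand in a line, and each player $P_i$ receives a hat whose colour $c_i$ is chosen uniformly at random from a fixed set of $q$ colours, independently of the other hats. Player $P_i$ sees exactly the hat colours $c_{i+1},\dots,c_n$. The players respond sequentially in the order $P_1,\dots,P_n$; each response is either a colour (a guess of one's own hat colour) or ''pass'', and each player hears all previous responses. No other communication is allowed, apart from agreeing on a strategy beforehand. A strategy specifies (deterministically), for each player $P_i$, his response as a function of the colours he sees and the responses he has heard. The players win if at least one player guesses correctly and no player guesses incorrectly; the success probability of a strategy is the probability that the players win. A strategy is restricted if, for every configuration of hats $(c_1,\dots,c_n)$, any guess made by a player other than $P_1$ is correct. *)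

(* Defs.v *)
From mathcomp Require Import all_boot all_order all_algebra.
Set Implicit Arguments. Unset Strict Implicit. Unset Printing Implicit Defensive.
Import Order.TTheory GRing.Theory Num.Theory.

(* Colours are 'I_q; a response is [option 'I_q] (None = "pass").
   Players are indexed 0..n-1 (player P_{i+1} has index i).
   A strategy gives, for player index i, the response as a function of
   the colours he sees (the list c_{i+1},...,c_{n-1}, 0-based) and the
   list of responses heard so far (responses of players 0..i-1). *)
Definition strategy (q : nat) :=
  nat -> seq 'I_q -> seq (option 'I_q) -> option 'I_q.

Fixpoint responses q (s : strategy q) (c : seq 'I_q) (k : nat)
  : seq (option 'I_q) :=
  match k with
  | 0 => [::]
  | k'.+1 => let r := responses s c k' in rcons r (s k' (drop k c) r)
  end.

Definition resp q n (s : strategy q) (c : n.-tuple 'I_q) (i : 'I_n)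
  : option 'I_q := nth None (responses s c n) i.

Definition wins q n (s : strategy q) (c : n.-tuple 'I_q) : bool :=
  [exists i : 'I_n, resp s c i == Some (tnth c i)] &&
  [forall i : 'I_n, if resp s c i is Some x then x == tnth c i else true].

(* success probability: hats uniform and independent, so each of the q^n
   configurations has probability 1/q^n *)
Definition success_prob q n (s : strategy q) : rat :=
  (#|[set c : n.-tuple 'I_q | wins s c]|%:R / (q ^ n)%:R)%R.

Definition restricted q n (s : strategy q) : Prop :=
  forall (c : n.-tuple 'I_q) (i : 'I_n) (x : 'I_q),
    0 < i -> resp s c i = Some x -> x = tnth c i.

(* Main.v *)
Require Import Defs.
From mathcomp Require Import all_boot all_order all_algebra.
From mathcomp Require Import zify ring.
Import Order.TTheory GRing.Theory Num.Theory.
Set Implicit Arguments. Unset Strict Implicit. Unset Printing Implicit Defensive.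

Fixpoint rf {q} (s : strategy q) (j : nat) (h : seq (option 'I_q)) (t : seq 'I_q)
  : seq (option 'I_q) :=
  match t with
  | [::] => [::]
  | x :: t' => let r := s j t' h in r :: rf s j.+1 (rcons h r) t'
  end.

Lemma size_rf q (s : strategy q) t : forall j h, size (rf s j h t) = size t.
Proof. by elim: t => [|x t IH] j h //=; rewrite IH. Qed.

Lemma responses_rf q (s : strategy q) (c : seq 'I_q) k : k <= size c ->
  rf s 0 [::] c = responses s c k ++ rf s k (responses s c k) (drop k c).
Proof.
elim: k => [|k IH] Hk; first by rewrite drop0.
rewrite IH; last exact: ltnW.
have E1 : drop k.+1 c = drop 1 (drop k c) by rewrite drop_drop add1n.
rewrite E1.
case E: (drop k c) => [|x t].
  by move: (f_equal size E); rewrite size_drop /=; lia.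
rewrite /= drop0 cat_rcons.
by rewrite E1 E /= drop0.
Qed.

Lemma resp_rf q n (s : strategy q) (c : n.-tuple 'I_q) (i : 'I_n) :
  resp s c i = nth None (rf s 0 [::] c) i.
Proof.
rewrite /resp (@responses_rf q s c n) ?size_tuple //.
by rewrite drop_oversize ?size_tuple //= cats0.
Qed.

Definition win q (L : seq (option 'I_q)) (t : seq 'I_q) : bool :=
  has (fun p => p.1 == Some p.2) (zip L t) &&
  all (fun p => if p.1 is Some y then y == p.2 else true) (zip L t).

Lemma wins_win q n (s : strategy q) (z : 'I_q) (c : n.-tuple 'I_q) :
  wins s c = win (rf s 0 [::] c) c.
Proof.
have Hs : size (rf s 0 [::] c) = size c by rewrite size_rf.
rewrite /wins /win; congr (_ && _).
- apply/existsP/(has_nthP (None, z)).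
  + move=> [i Hi]; exists i; first by rewrite size_zip Hs minnn size_tuple.
    by rewrite nth_zip //= -resp_rf -tnth_nth.
  + move=> [i Hi]; rewrite size_zip Hs minnn size_tuple in Hi.
    rewrite nth_zip //= => H; exists (Ordinal Hi).
    by rewrite resp_rf (tnth_nth z).
- apply/forallP/(all_nthP (None, z)).
  + move=> H i Hi; rewrite size_zip Hs minnn size_tuple in Hi.
    rewrite nth_zip //=; have := H (Ordinal Hi).
    by rewrite resp_rf (tnth_nth z).
  + move=> H i; have Hi : i < size (zip (rf s 0 [::] c) c)
      by rewrite size_zip Hs minnn size_tuple.
    have := H i Hi; rewrite nth_zip //= resp_rf.
    by rewrite (tnth_nth z).
Qed.

Fixpoint E q m : seq (seq 'I_q) :=
  if m is m'.+1 then [seq x :: t | t <- E q m', x <- enum 'I_q] else [:: [::]].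

Lemma count_sum T (P : pred T) (s : seq T) : count P s = \sum_(x <- s) (P x : nat).
Proof. by elim: s => [|x s IH]; rewrite ?big_nil ?big_cons //= IH. Qed.

Lemma count_E q m (P : pred (seq 'I_q)) :
  count P (E q m.+1) = \sum_(t <- E q m) count (fun x => P (x :: t)) (enum 'I_q).
Proof.
rewrite /=; elim: (E q m) => [|t s IH]; first by rewrite big_nil.
by rewrite big_cons /= count_cat IH count_map.
Qed.

Lemma size_E q m : size (E q m) = q ^ m.
Proof.
elim: m => [|m IH] //.
rewrite -count_predT count_E expnS -IH -count_predT count_sum.
rewrite big_distrr /=; apply: eq_bigr => t _.
by rewrite count_predT size_enum_ord muln1.
Qed.

Lemma win_le q (s : strategy q) : 0 < q -> forall m j h,
  count (fun t => win (rf s j h t) t) (E q m) <= q ^ m - (q - 1) ^ m.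
Proof.
move=> q0; elim=> [|m IH] j h; first by rewrite /= /win.
rewrite count_E.
pose G := fun t => s j t h != None.
pose A := fun t => (s j t h == None) && win (rf s j.+1 (rcons h None) t) t.
have step : forall t, count (fun x => win (rf s j h (x :: t)) (x :: t)) (enum 'I_q)
                      <= G t + q * A t.
  move=> t; rewrite /G /A /=.
  case: (s j t h) => [y|] /=.
  + rewrite add1n; apply: leq_trans (_ : count (pred1 y) (enum 'I_q) <= _).
      apply: sub_count => x /= /andP [_ /andP [/eqP -> _]]; exact: eqxx.
    by rewrite count_uniq_mem ?enum_uniq // mem_enum.
  + rewrite add0n /win; case: (_ && _) => /=.
      by rewrite count_predT size_enum_ord muln1.
    by rewrite count_pred0.
apply: leq_trans (_ : \sum_(t <- E q m) (G t + q * A t) <= _).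
  by apply: leq_sum => t _; exact: step.
rewrite big_split /= -big_distrr /= -!count_sum.
have H1 : count G (E q m) + count (predC G) (E q m) = q ^ m
  by rewrite count_predC size_E.
have H2 : count A (E q m) <= count (predC G) (E q m).
  by apply: sub_count => t; rewrite /A /G /= => /andP [-> _].
have H3 : count A (E q m) <= q ^ m - (q - 1) ^ m.
  apply: leq_trans (IH j.+1 (rcons h None)).
  by apply: sub_count => t; rewrite /A => /andP [_ ->].
have H4 : (q - 1) ^ m <= q ^ m.
  by elim: (m) => // k Hk; rewrite !expnS leq_mul // leq_subr.
move: H1 H2 H3 H4; rewrite !expnS.
move: (q ^ m) ((q - 1) ^ m) (count G _) (count A _) (count (predC G) _).
move=> a b cG cA cP H1 H2 H3 H4.
have {q0} [p ->] : exists p, q = p.+1 by exists q.-1; rewrite prednK.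
have H5 : p * cA <= p * (a - b) by rewrite leq_mul2l H3 orbT.
have H6 : p * b <= p * a by rewrite leq_mul2l H4 orbT.
rewrite mulnBr in H5.
rewrite !mulSn; lia.
Qed.

Lemma mem_E q m (s : seq 'I_q) : (s \in E q m) = (size s == m).
Proof.
elim: m s => [|m IH] [|x s] //=.
- by apply/allpairsP => -[[t y] /= [_ _ //]].
- apply/allpairsP/idP.
  + by move=> [[t y] /= [Ht _ [_ ->]]]; rewrite eqSS -(IH t).
  + move=> Hs; exists (s, x) => /=; split => //; first by rewrite IH.
    by rewrite mem_enum.
Qed.

Lemma uniq_E q m : uniq (E q m).
Proof.
elim: m => [|m IH] //=.
apply: allpairs_uniq => //; first exact: enum_uniq.
by move=> [t x] [t' x'] _ _ /= [-> ->].
Qed.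

Lemma card_E q n (P : pred (seq 'I_q)) :
  #|[set c : n.-tuple 'I_q | P c]| = count P (E q n).
Proof.
rewrite cardsE cardE /enum_mem size_filter -enumT.
transitivity (count P (map val (enum {: n.-tuple 'I_q}))).
  by rewrite [RHS]count_map enumT.
apply/permP/uniq_perm; first by rewrite map_inj_uniq ?enum_uniq //; exact: val_inj.
  exact: uniq_E.
move=> s; rewrite mem_E; apply/mapP/idP.
  by move=> [c _ ->]; rewrite size_tuple.
move=> Hs; exists (Tuple Hs) => //; by rewrite mem_enum.
Qed.

Definition sz q (z : 'I_q) : strategy q :=
  fun j v h => if all (fun o => o == None) h && (z \notin v) then Some z else None.

Lemma rf_none q (z : 'I_q) t : forall j h, ~~ all (fun o => o == None) h ->
  rf (sz z) j h t = nseq (size t) None.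
Proof.
elim: t => [|x t IH] j h Hh //=.
rewrite {1}/sz (negbTE Hh) /= IH //.
by rewrite all_rcons negb_and Hh orbT.
Qed.

Lemma nones q (t : seq 'I_q) :
  has (fun p => p.1 == Some p.2) (zip (nseq (size t) None) t) = false /\
  all (fun p => if p.1 is Some y then y == p.2 else true) (zip (nseq (size t) None) t).
Proof. by elim: t => //= y t [-> ->]. Qed.

Lemma sz_eq q (z : 'I_q) j t h : all (fun o => o == None) h ->
  sz z j t h = if z \in t then None else Some z.
Proof. by move=> Hh; rewrite /sz Hh /=; case: (z \in t). Qed.

Lemma rf_win q (z : 'I_q) t : forall j h, all (fun o => o == None) h ->
  win (rf (sz z) j h t) t = (z \in t).
Proof.
elim: t => [|x t IH] j h Hh //=.
rewrite sz_eq // in_cons.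
case Hz: (z \in t).
  rewrite orbT; have := IH j.+1 (rcons h None).
  by rewrite all_rcons Hh Hz /= => /(_ isT) <-.
rewrite rf_none; last by rewrite all_rcons negb_and /=.
rewrite /win /=.
case: (nones t) => -> ->.
have -> : (Some z == Some x) = (z == x) by apply/eqP/eqP => [[]|->].
by rewrite !orbF andbT andbb.
Qed.

Lemma rf_restr q (z : 'I_q) t : forall j h, all (fun o => o == None) h ->
  forall i y, nth None (rf (sz z) j h t) i = Some y -> (0 < i) || (z \in t) ->
  y = nth z t i.
Proof.
elim: t => [|x t IH] j h Hh i y; first by rewrite /= nth_nil.
rewrite /= sz_eq //.
case Hz: (z \in t) => /=.
  case: i => [//|i] /= H _.
  by apply: (IH _ _ _ i y H); rewrite ?Hz ?orbT // all_rcons Hh.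
rewrite rf_none; last by rewrite all_rcons negb_and /=.
case: i => [|i] /=.
  by move=> [<-]; rewrite in_cons Hz orbF => /eqP.
by rewrite nth_nseq; case: ifP.
Qed.

Lemma count_in_E q (z : 'I_q) m :
  count (fun t => z \in t) (E q m) = q ^ m - (q - 1) ^ m.
Proof.
have H : count (fun t => z \notin t) (E q m) = (q - 1) ^ m.
  elim: m => [|m IH] //.
  rewrite count_E expnS -IH count_sum big_distrr; apply: eq_bigr => t _.
  rewrite /=; case Hzt: (z \notin t) => /=.
  - rewrite muln1.
    have := count_predC (pred1 z) (enum 'I_q).
    rewrite count_uniq_mem ?enum_uniq // mem_enum size_enum_ord /= => Hc.
    have -> : q - 1 = count (predC (pred1 z)) (enum 'I_q) by rewrite -[in LHS]Hc add1n subn1.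
    apply: eq_count => x /=.
    by rewrite in_cons negb_or Hzt andbT eq_sym.
  - rewrite muln0; rewrite (eq_count (a2 := pred0)) ?count_pred0 // => x /=.
    by rewrite in_cons negb_or Hzt andbF.
have := count_predC (fun t => z \in t) (E q m); rewrite size_E => <-.
rewrite -H; have -> : count (predC (fun t => z \in t)) (E q m) =
   count (fun t => z \notin t) (E q m) by apply: eq_count.
by rewrite addnK.
Qed.

Local Open Scope ring_scope.

Theorem lemma5 (n q : nat) (hn : (1 <= n)%N) (hq : (1 < q)%N) :
  (exists s : strategy q, restricted n s /\
     success_prob n s = 1 - ((q - 1)%:R / q%:R) ^+ n) /\
  (forall s : strategy q, restricted n s ->
     success_prob n s <= 1 - ((q - 1)%:R / q%:R) ^+ n :> rat).
Proof.
have q0 : (0 < q)%N by apply: ltnW.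
pose z : 'I_q := Ordinal q0.
have Hpow : ((q - 1) ^ n <= q ^ n)%N.
  by elim: (n) => // k Hk; rewrite !expnS leq_mul // leq_subr.
have Hqn : (q ^ n)%:R != 0 :> rat by rewrite pnatr_eq0 -lt0n expn_gt0 q0.
have EQ : 1 - ((q - 1)%:R / q%:R) ^+ n = ((q ^ n - (q - 1) ^ n)%N)%:R / (q ^ n)%:R :> rat.
  rewrite (natrB _ Hpow) !natrX expr_div_n.
  rewrite natrX in Hqn. by field.
rewrite EQ; split.
- exists (sz z); split.
  + move=> c i x Hi; rewrite resp_rf (tnth_nth z) => H.
    by apply: (@rf_restr q z c 0 [::] isT i x H); rewrite Hi.
  + rewrite /success_prob; congr (_%:R / _).
    rewrite (_ : [set c | wins (sz z) c] = [set c : n.-tuple 'I_q | (fun t => z \in t) c]).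
      by rewrite (@card_E q n (fun t => z \in t)) count_in_E.
    by apply/setP => c; rewrite !inE (wins_win _ z) rf_win.
- move=> s _; rewrite /success_prob.
  have Hpos : 0 < ((q ^ n)%:R : rat)^-1 by rewrite invr_gt0 ltr0n expn_gt0 q0.
  rewrite ler_pM2r // ler_nat.
  rewrite (_ : [set c | wins s c] = [set c : n.-tuple 'I_q | (fun t => win (rf s 0 [::] t) t) c]).
    by rewrite (@card_E q n (fun t => win (rf s 0 [::] t) t)); apply: win_le.
  by apply/setP => c; rewrite !inE (wins_win _ z).
Qed.
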